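(* Let $S>0$, $I\ge1$, $J\in\{1,\dots,I\}$, $N_1,\dots,N_I$ positive integers and $\theta_1>\dots>\theta_I>0$. Consider the partial price differentiation problem: maximize $\sum_{i=1}^I n_ip_is_i$ over prices $p^1,\dots,p^J>0$, assignments $a_i^j\in\{0,1\}$ with $\sum_{j=1}^J a_i^j=1$ for each $i$, and $n_i\in\{0,\dots,N_i\}$, subject to $p_i=\sum_{j=1}^J a_i^jp^j$, $s_i=(\theta_i/p_i-1)^+$ for each $i$, and $\sum_{i=1}^I n_is_i\le S$. Call group $i$ effective in a feasible solution if $n_is_i>0$. Then at any optimal solution of this problem, the set of effective groups is $\{1,2,\dots,K\}$ for some integer $K$.
   Context: Group $i$ consists of $N_i$ users each with utility $\theta_i\ln(1+s)$; a user facing unit price $p$ demands $(\theta_i/p-1)^+$, where $(x)^+=\max(x,0)$. The service provider has total resource $S$ and may use at most $J$ distinct unit prices, each group being charged one of them. *)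

(* Defs.v *)
From mathcomp Require Import all_boot all_order all_algebra.
Set Implicit Arguments. Unset Strict Implicit. Unset Printing Implicit Defensive.
Import Order.TTheory GRing.Theory Num.Theory.
Local Open Scope ring_scope.

Definition pospart (R : realFieldType) (x : R) : R := Num.max x 0.

Definition grp_price (R : realFieldType) (I J : nat)
  (p : 'I_J -> R) (a : 'I_I -> 'I_J -> nat) (i : 'I_I) : R :=
  \sum_(j < J) (a i j)%:R * p j.

Definition grp_demand (R : realFieldType) (I J : nat) (theta : 'I_I -> R)
  (p : 'I_J -> R) (a : 'I_I -> 'I_J -> nat) (i : 'I_I) : R :=
  pospart (theta i / grp_price p a i - 1).

Definition revenue (R : realFieldType) (I J : nat) (theta : 'I_I -> R)
  (p : 'I_J -> R) (a : 'I_I -> 'I_J -> nat) (n : 'I_I -> nat) : R :=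
  \sum_(i < I) (n i)%:R * grp_price p a i * grp_demand theta p a i.

Definition feasible (R : realFieldType) (I J : nat) (S : R) (N : 'I_I -> nat)
  (theta : 'I_I -> R) (p : 'I_J -> R) (a : 'I_I -> 'I_J -> nat)
  (n : 'I_I -> nat) : Prop :=
  (forall j, 0 < p j) /\
  (forall i j, (a i j <= 1)%N) /\
  (forall i, (\sum_(j < J) a i j)%N = 1%N) /\
  (forall i, (n i <= N i)%N) /\
  \sum_(i < I) (n i)%:R * grp_demand theta p a i <= S.

Definition optimal (R : realFieldType) (I J : nat) (S : R) (N : 'I_I -> nat)
  (theta : 'I_I -> R) (p : 'I_J -> R) (a : 'I_I -> 'I_J -> nat)
  (n : 'I_I -> nat) : Prop :=
  feasible S N theta p a n /\
  forall (p' : 'I_J -> R) (a' : 'I_I -> 'I_J -> nat) (n' : 'I_I -> nat), feasible S N theta p' a' n' ->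
    revenue theta p' a' n' <= revenue theta p a n.

Definition effective (R : realFieldType) (I J : nat) (theta : 'I_I -> R)
  (p : 'I_J -> R) (a : 'I_I -> 'I_J -> nat) (n : 'I_I -> nat) (i : 'I_I) : Prop :=
  0 < (n i)%:R * grp_demand theta p a i.

(* Main.v *)
Require Import Defs.
From mathcomp Require Import all_boot all_order all_algebra.
From mathcomp Require Import ring lra.
Import Order.TTheory GRing.Theory Num.Theory.
Set Implicit Arguments. Unset Strict Implicit.
Local Open Scope ring_scope.

Section Aux.
Variable R : realFieldType.

Lemma pp_id (x : R) : 0 <= x -> pospart x = x.
Proof. by move=> h; rewrite /pospart max_l. Qed.
Lemma pp_0 (x : R) : x <= 0 -> pospart x = 0.
Proof. by move=> h; rewrite /pospart max_r. Qed.
Lemma pp_ge0 (x : R) : 0 <= pospart x.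
Proof. by rewrite /pospart le_max lexx orbT. Qed.
Lemma pp_ge (x : R) : x <= pospart x.
Proof. by rewrite /pospart le_max lexx. Qed.

Lemma seq_min (T : eqType) (f : T -> R) (s : seq T) : s != [::] ->
  exists2 m, m \in s & forall l, l \in s -> f m <= f l.
Proof.
elim: s => [|x s IH] //= _.
case: (eqVneq s [::]) => [->|/IH [m ms hm]].
  by exists x; [rewrite inE eqxx | move=> l; rewrite inE => /eqP->].
case: (lerP (f x) (f m)) => h.
+ exists x; first by rewrite inE eqxx.
  move=> l; rewrite inE => /orP [/eqP->|ls]; first by [].
  exact: le_trans h (hm _ ls).
+ exists m; first by rewrite inE ms orbT.
  move=> l; rewrite inE => /orP [/eqP->|ls]; first exact: ltW.
  exact: hm.
Qed.

Lemma fin_min n (P : pred 'I_n) (f : 'I_n -> R) (x0 : 'I_n) : P x0 ->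
  exists m, P m /\ forall l, P l -> f m <= f l.
Proof.
move=> Px0.
have [|m ms hm] := @seq_min _ f (enum P).
  by apply/negP => /eqP h; have := mem_enum P x0; rewrite h in_nil; move=> /esym; rewrite unfold_in Px0.
exists m; split; first by rewrite mem_enum in ms.
by move=> l Pl; apply: hm; rewrite mem_enum.
Qed.

Definition Gf n (w th : 'I_n -> R) (u : R) := \sum_(l < n) w l * pospart (th l * u - 1).

Lemma Gf0 n (w th : 'I_n -> R) : Gf w th 0 = 0.
Proof. by rewrite /Gf big1 // => l _; rewrite mulr0 sub0r pp_0 ?mulr0 // lerN10. Qed.

Lemma Gf_ge0 n (w th : 'I_n -> R) u : (forall l, 0 <= w l) -> 0 <= Gf w th u.
Proof. by move=> hw; apply: sumr_ge0 => l _; apply: mulr_ge0 => //; apply: pp_ge0. Qed.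

Lemma ivt n (w th : 'I_n -> R) : (forall l, 0 <= w l) -> (forall l, 0 < th l) ->
  forall k u0 c, (#|[pred l | ((0 < w l) && (1 < th l * u0))%R]| <= k)%N ->
  0 <= u0 -> 0 <= c -> c <= Gf w th u0 -> exists u, 0 <= u <= u0 /\ Gf w th u = c.
Proof.
move=> hw hth; elim=> [|k IH] u0 c hk hu0 hc hcG;
  (case: (eqVneq c 0) => [->|cn0]; first by exists 0; rewrite lexx hu0 Gf0);
  have cpos : 0 < c by rewrite lt_def cn0 hc.
all: have [m0 hm0] : exists m0, (0 < w m0) && (1 < th m0 * u0).
1,3: case/boolP: [exists l, (0 < w l) && (1 < th l * u0)] => [/existsP //|/existsPn hno];
  exfalso; have := lt_le_trans cpos hcG; rewrite /Gf big1 ?ltxx // => l _;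
  have := hno l; rewrite negb_and -!leNgt => /orP [hl|hl];
  [ by rewrite (@le_anti _ _ (w l) 0) ?mul0r // hl hw
  | by rewrite pp_0 ?mulr0 // subr_le0 ].
  by move: hk; rewrite leqn0 => /eqP/card0_eq/(_ m0); rewrite inE hm0.
have [m [actm hm]] := @fin_min n [pred l | (0 < w l) && (1 < th l * u0)] th m0 hm0.
rewrite inE /= in actm; case/andP: actm => wm0 thmu0.
have thm0 := hth m.
set b := 1 / th m.
have hb : 0 < b by rewrite divr_gt0.
have thmb : th m * b = 1 by rewrite /b mulrC divfK // gt_eqF.
have hbu0 : b < u0.
  by rewrite /b ltr_pdivrMr // mulrC.
set A := \sum_(l < n) (if (0 < w l) && (1 < th l * u0) then w l * th l else 0).
set M := \sum_(l < n) (if (0 < w l) && (1 < th l * u0) then w l else 0).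
have lin : forall u, b <= u <= u0 -> Gf w th u = A * u - M.
  move=> u /andP [bu uu0].
  rewrite /A /M mulr_suml -sumrB /Gf; apply: eq_bigr => l _.
  case: (boolP ((0 < w l) && (1 < th l * u0))) => al.
  - have hml := hm l al.
    have hu : 0 <= u by apply: le_trans (ltW hb) bu.
    rewrite pp_id; first by ring.
    rewrite subr_ge0 -thmb.
    apply: le_trans (_ : th m * u <= _); first by apply: ler_wpM2l => //; apply: ltW.
    by apply: ler_wpM2r.
  - move: al; rewrite negb_and -!leNgt => /orP [hl|hl].
    + by rewrite (@le_anti _ _ (w l) 0) ?mul0r ?mulr0 ?subr0 // hl hw.
    + rewrite pp_0 ?mulr0 ?mul0r ?subr0 // subr_le0.
      apply: le_trans hl; apply: ler_wpM2l; [exact: ltW | exact: uu0].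
have Apos : 0 < A.
  rewrite /A (bigD1 m) //= wm0 thmu0 /=.
  have h1 : 0 < w m * th m by apply: mulr_gt0.
  have h2 : 0 <= \sum_(i < n | i != m) (if (0 < w i) && (1 < th i * u0) then w i * th i else 0).
    apply: sumr_ge0 => i _; case: ifP => // /andP [h _].
    by apply: mulr_ge0; [exact: ltW | exact: ltW].
  lra.
case: (lerP (A * b - M) c) => hcase.
- exists ((c + M) / A).
  have hGu0 := lin u0 ltac:(by rewrite lexx (ltW hbu0)).
  split; last first.
    by rewrite lin; [rewrite mulrC divfK ?addrK // gt_eqF | 
       apply/andP; split; [rewrite ler_pdivlMr //; lra | rewrite ler_pdivrMr //; lra]].
  have : b <= (c + M) / A by rewrite ler_pdivlMr //; lra.
  move=> h; apply/andP; split; first exact: le_trans (ltW hb) h.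
  by rewrite ler_pdivrMr //; lra.
- have hGb : Gf w th b = A * b - M by apply: lin; rewrite lexx ltW.
  have hk' : (#|[pred l | ((0 < w l) && (1 < th l * b))%R]| <= k)%N.
    rewrite -ltnS; apply: leq_trans hk; apply: proper_card; apply/properP; split.
      apply/subsetP => l; rewrite !inE => /andP [-> hl] /=.
      apply: lt_le_trans hl _; apply: ler_wpM2l; [exact: ltW | exact: ltW].
    by exists m; rewrite !inE ?wm0 ?thmu0 // thmb ltxx andbF.
  have [u [/andP [hu1 hu2] hu]] := IH b c hk' (ltW hb) hc (ltac:(rewrite hGb; exact: ltW)).
  by exists u; rewrite hu1 (le_trans hu2 (ltW hbu0)).
Qed.

Lemma row_other (J : nat) (r : 'I_J -> nat) (j0 : 'I_J) :
  r j0 = 1%N -> (\sum_(j < J) r j)%N = 1%N -> forall j, j != j0 -> r j = 0%N.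
Proof.
move=> h1 hs j hj.
move: hs; rewrite (bigD1 j0) //= h1 add1n => /eqP; rewrite eqSS => /eqP /eqP.
by rewrite sum_nat_eq0 => /forallP /(_ j); rewrite hj => /eqP.
Qed.

Lemma class_price I J (pp : 'I_J -> R) (a : 'I_I -> 'I_J -> nat) l j0 :
  a l j0 = 1%N -> (\sum_(j < J) a l j)%N = 1%N -> grp_price pp a l = pp j0.
Proof.
move=> h1 hs; rewrite /grp_price (bigD1 j0) //= h1 mul1r big1 ?addr0 //.
by move=> j hj; rewrite (row_other h1 hs hj) mul0r.
Qed.

Lemma nonclass_price I J (pp pp' : 'I_J -> R) (a : 'I_I -> 'I_J -> nat) l j0 :
  a l j0 = 0%N -> (forall j, j != j0 -> pp j = pp' j) -> grp_price pp a l = grp_price pp' a l.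
Proof.
move=> h0 he; rewrite /grp_price; apply: eq_bigr => j _.
by case: (eqVneq j j0) => [->|hj]; [rewrite h0 !mul0r | rewrite he].
Qed.

Lemma row_one J (r : 'I_J -> nat) : (forall j, (r j <= 1)%N) -> (\sum_(j < J) r j)%N = 1%N ->
  exists j0, r j0 = 1%N.
Proof.
move=> hle hs.
case/boolP: [exists j, r j != 0%N] => [/existsP [j hj]|/existsPn hno].
  by exists j; have := hle j; move: hj; case: (r j) => [|[|]].
by move: hs; rewrite big1 // => j _; have := hno j; rewrite negbK => /eqP.
Qed.

Lemma improve I J (S : R) (N : 'I_I -> nat) (theta : 'I_I -> R)
  (p : 'I_J -> R) (a : 'I_I -> 'I_J -> nat) (n : 'I_I -> nat) (i k : 'I_I) :
  feasible S N theta p a n -> (forall i, (0 < N i)%N) -> (forall i, 0 < theta i) ->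
  theta k < theta i -> i != k -> effective theta p a n k -> ~ effective theta p a n i ->
  exists (p' : 'I_J -> R) (a' : 'I_I -> 'I_J -> nat) (n' : 'I_I -> nat), feasible S N theta p' a' n' /\ revenue theta p a n < revenue theta p' a' n'.
Proof.
move=> [hp [ha1 [hasum [hnN hresN]]]] hN hth hki hik effk neffi.
have [j0 hj0] := row_one (ha1 k) (hasum k).
set p0 := p j0.
have hp0 : 0 < p0 := hp j0.
set a' := fun l => if l == i then a k else a l.
set n' := fun l => if l == i then 1%N else if l == k then (n k).-1 else n l.
set inc := fun l => a' l j0 == 1%N.
set w := fun l => if inc l then ((n' l)%:R : R) else 0.
set resold := fun l => (n l)%:R * grp_demand theta p a l.
set revold := fun l => (n l)%:R * grp_price p a l * grp_demand theta p a l.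
set cterm := fun l => if inc l then resold l else 0.
set c := \sum_(l < I) cterm l.
have incP : forall l, inc l -> a' l j0 = 1%N by move=> l /eqP.
have inci : inc i by rewrite /inc /a' eqxx hj0.
have inck : inc k by rewrite /inc /a'; case: ifP => _; rewrite hj0.
have hsum' : forall l, (\sum_(j < J) a' l j)%N = 1%N by move=> l; rewrite /a'; case: ifP.
have ha1' : forall l j, (a' l j <= 1)%N by move=> l j; rewrite /a'; case: ifP.
have resold_ge0 : forall l, 0 <= resold l.
  by move=> l; apply: mulr_ge0; [exact: ler0n | exact: pp_ge0].
have resi : resold i = 0.
  apply: le_anti; rewrite resold_ge0 andbT leNgt; apply/negP => h; exact: neffi.
have revold_eq : forall l, revold l = grp_price p a l * resold l.
  by move=> l; rewrite /revold /resold; ring.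
have revi : revold i = 0 by rewrite revold_eq resi mulr0.
have nk : (0 < n k)%N.
  case E: (n k) => [|m] //; move: effk; by rewrite /effective E mul0r ltxx.
have hpk : grp_price p a k = p0 by apply: class_price hj0 (hasum k).
set sk := pospart (theta k * p0^-1 - 1).
set si := pospart (theta i * p0^-1 - 1).
have dk : grp_demand theta p a k = sk by rewrite /grp_demand hpk.
have skpos : 0 < sk.
  rewrite lt_def pp_ge0 andbT; apply/eqP => h; move: effk; by rewrite /effective dk h mulr0 ltxx.
have hkpos : 0 < theta k * p0^-1 - 1.
  rewrite ltNge; apply/negP => h; move: skpos; by rewrite /sk pp_0 // ltxx.
have sisk : sk < si.
  apply: lt_le_trans (pp_ge _); rewrite /sk pp_id; last exact: ltW.
  by rewrite ltrBlDr subrK ltr_pM2r // invr_gt0.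
have cpos : 0 < c.
  rewrite /c (bigD1 k) //= {1}/cterm inck.
  have h1 : 0 < resold k := effk.
  have h2 : 0 <= \sum_(l < I | l != k) cterm l.
    by apply: sumr_ge0 => l _; rewrite /cterm; case: ifP.
  lra.
have Gp0 : Gf w theta p0^-1 = c + si - sk.
  have -> : Gf w theta p0^-1 = c + (\sum_(l < I) (w l * pospart (theta l * p0^-1 - 1) - cterm l)).
    by rewrite sumrB /c addrC subrK.
  have -> : \sum_(l < I) (w l * pospart (theta l * p0^-1 - 1) - cterm l) =
            \sum_(l < I) ((if l == i then si else 0) - (if l == k then sk else 0)).
    apply: eq_bigr => l _.
    case: (eqVneq l i) => [->|li].
      by rewrite /w /cterm inci resi /n' eqxx (negbTE hik) mul1r !subr0.
    case: (eqVneq l k) => [->|lk].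
      have hki' : (k == i) = false by rewrite eq_sym (negbTE hik).
      rewrite /w /cterm inck /n' hki' eqxx /resold dk.
      case E: (n k) nk => [|m] // _ /=; rewrite -natr1 -/sk; ring.
    rewrite /w /cterm /n' (negbTE li) (negbTE lk).
    case: ifP => hl; last by rewrite mul0r subrr.
    have hal : a l j0 = 1%N by move: hl; rewrite /inc /a' (negbTE li) => /eqP.
    by rewrite /resold /grp_demand (class_price _ hal (hasum l)) subrr subr0.
  rewrite sumrB -!big_mkcond /= !big_pred1_eq; ring.
have hw : forall l, 0 <= w l by move=> l; rewrite /w; case: ifP.
have hp0i : 0 < p0^-1 by rewrite invr_gt0.
have [u [/andP [hu0 hu1] hGu]] := ivt hw hth (leqnn _) (ltW hp0i) (ltW cpos)
   ltac:(rewrite Gp0; lra).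
have upos : 0 < u.
  rewrite lt_def hu0 andbT; apply/eqP => h; move: hGu; rewrite h Gf0 => h'.
  by move: cpos; rewrite -h' ltxx.
have ult : u < p0^-1.
  rewrite lt_def hu1 andbT; apply/eqP => h; move: hGu; rewrite -h Gp0 => h'.
  lra.
set q := u^-1.
have hq : p0 < q.
  by rewrite /q -[p0 in p0 < _]invrK ltf_pV2 // posrE.
have hqpos : 0 < q := lt_trans hp0 hq.
have qinv : q^-1 = u by rewrite /q invrK.
set p' := fun j => if j == j0 then q else p j.
have price_in : forall l, inc l -> grp_price p' a' l = q.
  by move=> l hl; rewrite (class_price _ (incP l hl) (hsum' l)) /p' eqxx.
have price_out : forall l, ~~ inc l -> [/\ a' l = a l, n' l = n l & grp_price p' a' l = grp_price p a l].
  move=> l hl.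
  have li : l != i by apply: contraNneq hl => ->.
  have lk : l != k by apply: contraNneq hl => ->.
  have ea : a' l = a l by rewrite /a' (negbTE li).
  have en : n' l = n l by rewrite /n' (negbTE li) (negbTE lk).
  split => //; transitivity (grp_price p' a l); first by rewrite /grp_price; apply: eq_bigr => j _; rewrite ea. apply: (nonclass_price (j0 := j0)).
    by move: hl (ha1 l j0); rewrite /inc ea; case: (a l j0) => [|[|]].
  by move=> j hj; rewrite /p' (negbTE hj).
have hnew : forall l, (n' l)%:R * grp_demand theta p' a' l =
    resold l + w l * pospart (theta l * u - 1) - cterm l.
  move=> l; case: (boolP (inc l)) => hl.
    by rewrite /grp_demand price_in // /w /cterm hl qinv; ring.
  case: (price_out l hl) => ea en ep.
  by rewrite /w /cterm (negbTE hl) /resold /grp_demand en ep mul0r !subr0 addr0.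
have hrev : forall l, (n' l)%:R * grp_price p' a' l * grp_demand theta p' a' l =
    revold l + q * (w l * pospart (theta l * u - 1)) - p0 * cterm l.
  move=> l; case: (boolP (inc l)) => hl.
    have -> : revold l = p0 * resold l.
      case: (eqVneq l i) => [->|li]; first by rewrite revi resi mulr0.
      have hal : a l j0 = 1%N by move: (incP l hl); rewrite /a' (negbTE li).
      by rewrite revold_eq (class_price _ hal (hasum l)).
    by rewrite /grp_demand price_in // /w /cterm hl qinv; ring.
  case: (price_out l hl) => ea en ep.
  by rewrite /w /cterm (negbTE hl) /revold /grp_demand en ep mul0r !mulr0 !subr0 addr0.
exists p', a', n'; split.
  split; first by move=> j; rewrite /p'; case: ifP.
  split; first exact: ha1'.
  split; first exact: hsum'.
  split.
    move=> l; rewrite /n'; case: ifP => _; first exact: hN.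
    by case: ifP => [/eqP ->|_]; [exact: leq_trans (leq_pred _) (hnN k) | exact: hnN].
  rewrite (eq_bigr _ (fun l _ => hnew l)) sumrB big_split /= -/c.
  by rewrite -/(Gf w theta u) hGu addrK.

rewrite /revenue (eq_bigr _ (fun l _ => hrev l)) sumrB big_split /=.
rewrite -mulr_sumr -mulr_sumr -/c [X in _ + q * X]hGu.
have : 0 < (q - p0) * c by apply: mulr_gt0 => //; rewrite subr_gt0.
rewrite /revold; lra.
Qed.
End Aux.

Theorem lemma2 (R : realFieldType) (I J : nat) (S : R) (N : 'I_I -> nat)
  (theta : 'I_I -> R)
  (hS : 0 < S) (hI : (1 <= I)%N) (hJ1 : (1 <= J)%N) (hJI : (J <= I)%N)
  (hN : forall i, (0 < N i)%N)
  (htheta_dec : forall i k : 'I_I, (i < k)%N -> theta k < theta i)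
  (htheta_pos : forall i, 0 < theta i)
  (p : 'I_J -> R) (a : 'I_I -> 'I_J -> nat) (n : 'I_I -> nat)
  (hopt : optimal S N theta p a n) :
  exists K : nat, forall i : 'I_I, effective theta p a n i <-> (i < K)%N.
Proof.
case: hopt => hfeas hbest.
have closed : forall i k : 'I_I, (i < k)%N -> effective theta p a n k -> effective theta p a n i.
  move=> i k hik effk.
  case/boolP: (0 < (n i)%:R * grp_demand theta p a i) => // hn.
  have neffi : ~ effective theta p a n i by move=> h; rewrite h in hn.
  have ik : i != k by rewrite neq_ltn hik.
  have [p' [a' [n' [hf hlt]]]] := improve hfeas hN htheta_pos (htheta_dec _ _ hik) ik effk neffi.
  by have := hbest _ _ _ hf; rewrite leNgt hlt.
exists (\max_(l : 'I_I | (0 < (n l)%:R * grp_demand theta p a l)%R) (nat_of_ord l).+1).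
move=> i; split.
  by move=> h; apply: (leq_bigmax_cond (F := fun l : 'I_I => (nat_of_ord l).+1) i h).
move=> hi; case/boolP: (0 < (n i)%:R * grp_demand theta p a i) => // hn.
exfalso; move: hi; apply/negP; rewrite -leqNgt; apply/bigmax_leqP => l hl.
rewrite ltnNge; apply/negP => hil.
case: (ltngtP i l) hil => [hil _|//|eil _].
  by have := closed i l hil hl; rewrite /effective (negbTE hn).
by move: hl; rewrite -(val_inj eil) (negbTE hn).
Qed.
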